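(* The asynchronous iteration corresponding to the synchronous block ILU fixed-point iteration $\mathbf{x}^{n+1} = \mathbf{h}(\mathbf{x}^n)$ is locally convergent, ie., if $\mathbf{x}_*$ is a fixed point of the asynchronous iteration, it is a point of attraction of the iteration.
   Context: Let $\mathbf{A}\in\mathbb{R}^{n\times n}$ be partitioned into square $b\times b$ blocks, and $S_B$ a set of block indices containing all diagonal blocks. The unknowns (entries of the block ILU factors $\mathbf{L}_{ij}$, $i>j$, and $\mathbf{U}_{ij}$, $i\le j$, for $(i,j)\in S_B$) form $\mathbf{x}\in\mathbb{R}^m$, $m=|S_B|b^2$, with $\mathbf{X}_{ij}$ the $b\times b$ block for index $(i,j)$ and $\beta_B:S_B\to\{1,\dots,m/b^2\}$ a bijective block ordering. The map $\mathbf{h}:D_B\to\mathbb{R}^m$ is given blockwise by $\mathbf{H}_{ij}(\mathbf{x})=(\mathbf{A}_{ij}-\sum_{k=1}^{j-1}\mathbf{X}_{ik}\mathbf{X}_{kj})\mathbf{X}_{jj}^{-1}$ for $i>j$ and $\mathbf{H}_{ij}(\mathbf{x})=\mathbf{A}_{ij}-\sum_{k=1}^{i-1}\mathbf{X}_{ik}\mathbf{X}_{kj}$ for $i\le j$, on $D_B:=\{\mathbf{x}: \mathbf{X}_{jj}\text{ nonsingular for all diagonal blocks}\}$. The asynchronous (block-asynchronous) iteration is $\mathbf{X}_{ij}^{k+1}=\mathbf{H}_{ij}(x_1^{k-s_1(k)},\dots,x_m^{k-s_m(k)})$ if $\beta_B(i,j)=u(k)$ and $\mathbf{X}_{ij}^{k+1}=\mathbf{X}_{ij}^k$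 otherwise, where the shifts satisfy $0\le s_i(k)\le\min\{k-1,\hat s\}$ for a fixed $\hat s\in\mathbb{N}$, and the update function $u:\mathbb{N}\to\{1,\dots,m/b^2\}$ satisfies: for every $i$ and $k$ there exists $l>k$ with $u(l)=i$. *)

(* Defs.v *)
From HB Require Import structures.
From mathcomp Require Import all_boot all_order all_algebra.
From mathcomp Require Import all_classical all_reals all_analysis.
Set Implicit Arguments. Unset Strict Implicit. Unset Printing Implicit Defensive.
Import Order.TTheory GRing.Theory Num.Theory.
Local Open Scope ring_scope.

(* Global row/column index of local index r inside block i, for an
   (N*b) x (N*b) matrix partitioned into N x N blocks of size b x b:
   value i*b + r (0-based). *)
Lemma gidx_proof (N b : nat) (i : 'I_N) (r : 'I_b) : (i * b + r < N * b)%N.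
Proof.
have hr := ltn_ord r; have hi := ltn_ord i.
apply: (@leq_trans ((i.+1) * b)); first by rewrite mulSn [(b + _)%N]addnC ltn_add2l.
by rewrite leq_mul2r hi orbT.
Qed.

Definition gidx (N b : nat) (i : 'I_N) (r : 'I_b) : 'I_(N * b) :=
  Ordinal (gidx_proof i r).

Definition Ablk (R : ringType) (N b : nat) (A : 'M[R]_(N * b)) (i j : 'I_N)
  : 'M[R]_b := \matrix_(r < b, c < b) A (gidx i r) (gidx j c).

(* A vector of unknowns x in R^m is represented by a family of b x b blocks
   X i j; only the blocks with (i,j) \in S are unknowns, the others are
   meaningless (they are masked to 0 whenever used). *)
Definition mask (R : ringType) (N b : nat) (S : {set 'I_N * 'I_N})
  (X : 'I_N -> 'I_N -> 'M[R]_b) (i j : 'I_N) : 'M[R]_b :=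
  if (i, j) \in S then X i j else 0.

Definition inDB (R : comUnitRingType) (N b : nat)
  (X : 'I_N -> 'I_N -> 'M[R]_b) : Prop :=
  forall j : 'I_N, X j j \in unitmx.

(* The block map H_ij (0-based indices: k = 1..j-1 becomes k < j). *)
Definition Hblk (R : comUnitRingType) (N b : nat) (A : 'M[R]_(N * b))
  (S : {set 'I_N * 'I_N}) (X : 'I_N -> 'I_N -> 'M[R]_b) (i j : 'I_N)
  : 'M[R]_b :=
  if (j < i)%N then
    (Ablk A i j - \sum_(k < N | (k < j)%N) mask S X i k *m mask S X k j)
      *m invmx (mask S X j j)
  else
    Ablk A i j - \sum_(k < N | (k < i)%N) mask S X i k *m mask S X k j.

(* The delayed ("mixed") vector (x_1^{k-s_1(k)}, ..., x_m^{k-s_m(k)}),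
   scalar components indexed by (block i j, row r, column c). *)
Definition delayed (R : Type) (N b : nat)
  (x : nat -> 'I_N -> 'I_N -> 'M[R]_b)
  (s : nat -> 'I_N -> 'I_N -> 'I_b -> 'I_b -> nat) (k : nat)
  : 'I_N -> 'I_N -> 'M[R]_b :=
  fun i j => \matrix_(r < b, c < b) x (k - s k i j r c)%N i j r c.

Definition async_run (R : comUnitRingType) (N b : nat) (A : 'M[R]_(N * b))
  (S : {set 'I_N * 'I_N}) (s : nat -> 'I_N -> 'I_N -> 'I_b -> 'I_b -> nat)
  (u : nat -> 'I_N * 'I_N) (x : nat -> 'I_N -> 'I_N -> 'M[R]_b) : Prop :=
  forall k : nat, (1 <= k)%N -> forall i j : 'I_N, (i, j) \in S ->
    x k.+1 i j = if u k == (i, j) then Hblk A S (delayed x s k) i j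
                 else x k i j.

Definition admissible_shifts (N b : nat) (S : {set 'I_N * 'I_N})
  (shat : nat) (s : nat -> 'I_N -> 'I_N -> 'I_b -> 'I_b -> nat) : Prop :=
  forall k : nat, (1 <= k)%N -> forall (i j : 'I_N) (r c : 'I_b),
    (i, j) \in S -> (s k i j r c <= minn k.-1 shat)%N.

Definition admissible_update (N : nat) (S : {set 'I_N * 'I_N})
  (u : nat -> 'I_N * 'I_N) : Prop :=
  (forall k, u k \in S) /\
  (forall p, p \in S -> forall k : nat, exists l : nat, (k < l)%N /\ u l = p).

(* Main.v *)
Require Import Defs.
From HB Require Import structures.
From mathcomp Require Import all_boot all_order all_algebra.
From mathcomp Require Import all_classical all_reals all_analysis.
From mathcomp Require Import zify.
Import Order.TTheory GRing.Theory Num.Theory.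
Import numFieldNormedType.Exports.
Local Open Scope classical_set_scope.
Local Open Scope ring_scope.
Set Implicit Arguments. Unset Strict Implicit.
Lemma cvg_sumr (R : realType) (T : Type) (F : set_system T) {FF : Filter F}
  (I : Type) (r : seq I) (P : pred I) (f : I -> T -> R) (a : I -> R) :
  (forall i, P i -> f i @ F --> a i) ->
  (fun x => \sum_(i <- r | P i) f i x) @ F --> \sum_(i <- r | P i) a i.
Proof.
move=> h; elim: r => [|i r IH].
  rewrite big_nil; under eq_cvg do rewrite big_nil; exact: cvg_cst.
rewrite big_cons; under eq_cvg do rewrite big_cons.
case: ifPn => Pi //; exact: cvgD (h i Pi) IH.
Qed.

Lemma cvg_prodr (R : realType) (T : Type) (F : set_system T) {FF : Filter F}
  (I : Type) (r : seq I) (P : pred I) (f : I -> T -> R) (a : I -> R) :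
  (forall i, P i -> f i @ F --> a i) ->
  (fun x => \prod_(i <- r | P i) f i x) @ F --> \prod_(i <- r | P i) a i.
Proof.
move=> h; elim: r => [|i r IH].
  rewrite big_nil; under eq_cvg do rewrite big_nil; exact: cvg_cst.
rewrite big_cons; under eq_cvg do rewrite big_cons.
case: ifPn => Pi //; exact: cvgM (h i Pi) IH.
Qed.

Definition mcv (R : realType) (T : Type) (F : set_system T) (m n : nat)
  (M : T -> 'M[R]_(m, n)) (L : 'M[R]_(m, n)) :=
  forall i j, (fun x => M x i j) @ F --> L i j.

Lemma mcv_cst (R : realType) (T : Type) (F : set_system T) {FF : Filter F} m n
  (L : 'M[R]_(m, n)) : mcv F (fun _ => L) L.
Proof. by move=> i j; exact: cvg_cst. Qed.

Lemma mcv_add (R : realType) (T : Type) (F : set_system T) {FF : Filter F} m n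
  (M M' : T -> 'M[R]_(m, n)) L L' :
  mcv F M L -> mcv F M' L' -> mcv F (fun x => M x + M' x) (L + L').
Proof.
move=> h h' i j; rewrite mxE; under eq_cvg do rewrite mxE.
exact: cvgD (h i j) (h' i j).
Qed.

Lemma mcv_opp (R : realType) (T : Type) (F : set_system T) {FF : Filter F} m n
  (M : T -> 'M[R]_(m, n)) L :
  mcv F M L -> mcv F (fun x => - M x) (- L).
Proof.
move=> h i j; rewrite mxE; under eq_cvg do rewrite mxE.
exact: cvgN (h i j).
Qed.

Lemma mcv_mul (R : realType) (T : Type) (F : set_system T) {FF : Filter F} m n p
  (M : T -> 'M[R]_(m, n)) (M' : T -> 'M[R]_(n, p)) L L' :
  mcv F M L -> mcv F M' L' -> mcv F (fun x => M x *m M' x) (L *m L').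
Proof.
move=> h h' i j; rewrite mxE; under eq_cvg do rewrite mxE.
apply: cvg_sumr => k _; exact: cvgM (h i k) (h' k j).
Qed.

Lemma mcv_sum (R : realType) (T : Type) (F : set_system T) {FF : Filter F} m n
  (I : Type) (r : seq I) (P : pred I)
  (M : I -> T -> 'M[R]_(m, n)) L :
  (forall k, P k -> mcv F (M k) (L k)) ->
  mcv F (fun x => \sum_(k <- r | P k) M k x) (\sum_(k <- r | P k) L k).
Proof.
move=> h i j; rewrite summxE; under eq_cvg do rewrite summxE.
apply: cvg_sumr => k Pk; exact: h.
Qed.

Lemma cv_det (R : realType) (T : Type) (F : set_system T) {FF : Filter F} n
  (M : T -> 'M[R]_n) L :
  mcv F M L -> (fun x => \det (M x)) @ F --> \det L.
Proof.
move=> h; rewrite /determinant.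
apply: cvg_sumr => s _; apply: cvgM; first exact: cvg_cst.
apply: cvg_prodr => i _; exact: h.
Qed.

Lemma mcv_adj (R : realType) (T : Type) (F : set_system T) {FF : Filter F} n
  (M : T -> 'M[R]_n) L :
  mcv F M L -> mcv F (fun x => \adj (M x)) (\adj L).
Proof.
move=> h i j; rewrite mxE; under eq_cvg do rewrite mxE.
rewrite /cofactor; apply: cvgM; first exact: cvg_cst.
apply: cv_det => r c; rewrite !mxE; under eq_cvg do rewrite !mxE.
exact: h.
Qed.

Lemma mcv_inv (R : realType) (T : Type) (F : set_system T) {FF : Filter F} n
  (M : T -> 'M[R]_n) L :
  mcv F M L -> L \in unitmx -> mcv F (fun x => invmx (M x)) (invmx L).
Proof.
move=> h hL.
have hd : (fun x => \det (M x)) @ F --> \det L by exact: cv_det.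
have hdL : \det L != 0 by rewrite -unitfE -unitmxE.
have nU : \forall x \near F, M x \in unitmx.
  have hpos : 0 < `|\det L| by rewrite normr_gt0.
  have := (cvgrPdist_lt _ _).1 hd _ hpos.
  move=> /(_ FF) H; apply: (@filterS _ _ FF _ _ _ H) => x /= hx; rewrite unitmxE unitfE; apply/eqP => h0.
  by move: hx; rewrite h0 subr0 ltxx.
move=> i j; rewrite /invmx hL mxE.
apply: (cvg_trans (near_eq_cvg (f := fun x => (\det (M x))^-1 * \adj (M x) i j) _)).
  apply: (@filterS _ _ FF _ _ _ nU). move=> x /= hx; by rewrite hx !mxE.
have ha : (fun x => \adj (M x) i j) @ F --> \adj L i j by exact: mcv_adj.
exact: cvgM (cvgV hdL hd) ha.
Qed.

Definition rk (N : nat) (p q : 'I_N) : nat := ((minn p q).*2 + (q < p))%N.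

Lemma rk_lt N (p q : 'I_N) : (rk p q < N.*2)%N.
Proof. rewrite /rk; have := ltn_ord p; have := ltn_ord q; lia. Qed.

Lemma Hblk_loc (R : comUnitRingType) N b (A : 'M[R]_(N * b)) (S : {set 'I_N * 'I_N})
  (X Y : 'I_N -> 'I_N -> 'M[R]_b) (i j : 'I_N) :
  (forall p q : 'I_N, (p, q) \in S -> (rk p q < rk i j)%N -> X p q = Y p q) ->
  Hblk A S X i j = Hblk A S Y i j.
Proof.
move=> h.
have mE : forall p q : 'I_N, (rk p q < rk i j)%N -> Defs.mask S X p q = Defs.mask S Y p q.
  by move=> p q hr; rewrite /Defs.mask; case: ifP => // hpq; apply: h.
rewrite /Hblk; case: ifP => ji.
  rewrite (mE j j); last by rewrite /rk; lia.
  congr (_ *m _); congr (_ - _); apply: eq_bigr => k hk.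
  by rewrite !mE //; rewrite /rk; lia.
congr (_ - _); apply: eq_bigr => k hk.
by rewrite !mE //; rewrite /rk; lia.
Qed.

Definition close (R : realType) N b (S : {set 'I_N * 'I_N})
  (Xs : 'I_N -> 'I_N -> 'M[R]_b) (e : R) (X : 'I_N -> 'I_N -> 'M[R]_b) :=
  forall p q r c, (p, q) \in S -> `|X p q r c - Xs p q r c| < e.

Definition closeF (R : realType) N b (S : {set 'I_N * 'I_N})
  (Xs : 'I_N -> 'I_N -> 'M[R]_b) :=
  filter_from [set e : R | 0 < e] (fun e => [set X | close S Xs e X]).

Lemma closeF_filter (R : realType) N b (S : {set 'I_N * 'I_N})
  (Xs : 'I_N -> 'I_N -> 'M[R]_b) : Filter (closeF S Xs).
Proof.
rewrite /closeF; apply: filter_from_filter; first by exists 1 => /=.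
move=> e1 e2 /= h1 h2; exists (Num.min e1 e2); first by rewrite lt_min h1 h2.
move=> X hX; split => p q r c hpq; have := hX p q r c hpq; rewrite lt_min => /andP[] //.
Qed.

Lemma mcv_mask (R : realType) N b (S : {set 'I_N * 'I_N})
  (Xs : 'I_N -> 'I_N -> 'M[R]_b) (p q : 'I_N) :
  mcv (closeF S Xs) (fun X => Defs.mask S X p q) (Defs.mask S Xs p q).
Proof.
have FF := closeF_filter S Xs.
move=> r c; rewrite /Defs.mask; case: ifP => hpq; last exact: cvg_cst.
apply/cvgrPdist_lt => e e0; exists e => // X /= hX.
by rewrite distrC hX.
Qed.

Lemma mcv_H (R : realType) N b (A : 'M[R]_(N * b)) (S : {set 'I_N * 'I_N})
  (hdiag : forall i : 'I_N, (i, i) \in S)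
  (Xs : 'I_N -> 'I_N -> 'M[R]_b) (hXsD : inDB Xs) (i j : 'I_N) :
  mcv (closeF S Xs) (fun X => Hblk A S X i j) (Hblk A S Xs i j).
Proof.
have FF := closeF_filter S Xs.
rewrite /Hblk; case: ifP => _.
  apply: mcv_mul; last first.
    apply: mcv_inv; first exact: mcv_mask.
    by rewrite /Defs.mask hdiag.
  apply: mcv_add; first exact: mcv_cst.
  apply: mcv_opp; apply: mcv_sum => k _; apply: mcv_mul; exact: mcv_mask.
apply: mcv_add; first exact: mcv_cst.
apply: mcv_opp; apply: mcv_sum => k _; apply: mcv_mul; exact: mcv_mask.
Qed.

Lemma Hcont (R : realType) N b (A : 'M[R]_(N * b)) (S : {set 'I_N * 'I_N})
  (hdiag : forall i : 'I_N, (i, i) \in S)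
  (Xs : 'I_N -> 'I_N -> 'M[R]_b) (hXsD : inDB Xs) (e : R) : 0 < e ->
  exists2 d : R, 0 < d & forall X, close S Xs d X ->
    forall i j r c, `|Hblk A S Xs i j r c - Hblk A S X i j r c| < e.
Proof.
move=> e0; have FF := closeF_filter S Xs.
have : \forall X \near closeF S Xs, forall t : 'I_N * 'I_N * 'I_b * 'I_b,
    `|Hblk A S Xs t.1.1.1 t.1.1.2 t.1.2 t.2 - Hblk A S X t.1.1.1 t.1.1.2 t.1.2 t.2| < e.
  apply: filter_forall => -[[[i j] r] c] /=.
  have := @mcv_H _ _ _ A S hdiag Xs hXsD i j r c.
  by move/cvgrPdist_lt => /(_ e e0).
case=> d d0 hd; exists d => // X hX i j r c.
exact: (hd X hX (i, j, r, c)).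
Qed.

Lemma Ucont (R : realType) N b (S : {set 'I_N * 'I_N})
  (hdiag : forall i : 'I_N, (i, i) \in S)
  (Xs : 'I_N -> 'I_N -> 'M[R]_b) (hXsD : inDB Xs) :
  exists2 d : R, 0 < d & forall X, close S Xs d X -> inDB X.
Proof.
have FF := closeF_filter S Xs.
have : \forall X \near closeF S Xs, forall j : 'I_N,
    `|\det (Xs j j) - \det (Defs.mask S X j j)| < `|\det (Xs j j)|.
  apply: filter_forall => j.
  have hc : (fun X => \det (Defs.mask S X j j)) @ closeF S Xs --> \det (Defs.mask S Xs j j).
    apply: cv_det; exact: mcv_mask.
  move: hc; rewrite {2}/Defs.mask hdiag => /cvgrPdist_lt; apply.
  by rewrite normr_gt0 -unitfE -unitmxE.
case=> d d0 hd; exists d => // X hX j.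
have := hd X hX j; rewrite /Defs.mask hdiag unitmxE unitfE => h.
by apply/eqP => h0; move: h; rewrite h0 subr0 ltxx.
Qed.

Unset Implicit Arguments.
Theorem theorem6 (R : realType) (N b : nat) (A : 'M[R]_(N * b))
  (S : {set 'I_N * 'I_N}) (hdiag : forall i : 'I_N, (i, i) \in S)
  (Xs : 'I_N -> 'I_N -> 'M[R]_b)
  (hXsD : inDB Xs)
  (hfix : forall i j : 'I_N, (i, j) \in S -> Hblk A S Xs i j = Xs i j)
  (shat : nat) :
  exists2 delta : R, 0 < delta &
    forall (s : nat -> 'I_N -> 'I_N -> 'I_b -> 'I_b -> nat)
           (u : nat -> 'I_N * 'I_N) (x : nat -> 'I_N -> 'I_N -> 'M[R]_b),
      admissible_shifts S shat s ->
      admissible_update S u ->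
      async_run A S s u x ->
      (forall (i j : 'I_N) (r c : 'I_b), (i, j) \in S ->
         `|x 1%N i j r c - Xs i j r c| < delta) ->
      (forall k : nat, (1 <= k)%N -> inDB (x k) /\ inDB (delayed x s k)) /\
      (forall (i j : 'I_N) (r c : 'I_b), (i, j) \in S ->
         (fun k : nat => x k i j r c) @ \oo --> Xs i j r c).
Proof.
have [d0 d00 hU] := Ucont hdiag hXsD.
have Q : forall (r : nat) (e : R), 0 < e -> exists2 d : R, 0 < d &
   forall s u x, admissible_shifts S shat s -> admissible_update S u ->
   async_run A S s u x ->
   (forall i j r c, (i, j) \in S -> `|x 1%N i j r c - Xs i j r c| < d) ->
   forall k, (1 <= k)%N -> forall p q rr cc, (p, q) \in S -> (rk p q < r)%N ->
     `|x k p q rr cc - Xs p q rr cc| < e.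
  elim=> [|r IH] e e0.
    by exists 1 => // *.
  have [eta eta0 hH] := Hcont A hdiag hXsD e0.
  have me0 : 0 < Num.min e eta by rewrite lt_min e0 eta0.
  have [d dpos hd] := IH _ me0.
  exists (Num.min d e); first by rewrite lt_min dpos e0.
  move=> s u x hs hu hx hinit.
  have hinit' : forall i j r c, (i, j) \in S -> `|x 1%N i j r c - Xs i j r c| < d.
    by move=> i j r' c hij; have := hinit i j r' c hij; rewrite lt_min => /andP[].
  have low := hd s u x hs hu hx hinit'.
  move=> k hk p q rr cc hpq; rewrite ltnS leq_eqVlt => /orP[/eqP hr | hr]; last first.
    by have := low k hk p q rr cc hpq hr; rewrite lt_min => /andP[].
  elim: k hk rr cc => // k IHk _ rr cc.
  have [->|kpos] := posnP k.
    by have := hinit p q rr cc hpq; rewrite lt_min => /andP[].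
  rewrite (hx k kpos p q hpq); case: eqP => _; last exact: IHk.
  pose X' := fun p' q' : 'I_N => if (rk p' q' < r)%N then delayed x s k p' q' else Xs p' q'.
  rewrite (@Hblk_loc _ _ _ A S _ X'); last first.
    by move=> p' q' _ hr'; rewrite /X' -hr hr'.
  have cX : close S Xs eta X'.
    move=> p' q' r' c' hpq'; rewrite /X'; case: ifP => hr'; last by rewrite subrr normr0.
    rewrite /delayed mxE.
    have hsk := hs k kpos p' q' r' c' hpq'.
    have hk1 : (1 <= k - s k p' q' r' c')%N.
      by move: hsk; rewrite leq_min => /andP[h1 _]; lia.
    by have := low _ hk1 p' q' r' c' hpq' hr'; rewrite lt_min => /andP[].
  by rewrite -(hfix p q hpq) distrC; exact: hH X' cX p q rr cc.
have E : forall s u x, admissible_shifts S shat s -> admissible_update S u ->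
    async_run A S s u x ->
    forall r, exists2 K, (1 <= K)%N & forall k, (K <= k)%N -> forall p q,
      (p, q) \in S -> (rk p q < r)%N -> x k p q = Xs p q.
  move=> s u x hs hu hx; elim=> [|r [K K1 hK]]; first by exists 1%N.
  have hH : forall k, (K + shat <= k)%N -> forall p q, (p, q) \in S -> rk p q = r ->
      Hblk A S (delayed x s k) p q = Xs p q.
    move=> k hk p q hpq hr; rewrite -(hfix p q hpq); apply: Hblk_loc => p' q' hpq' hr'.
    apply/matrixP => rr cc; rewrite /delayed mxE.
    have kpos : (1 <= k)%N by lia.
    have hsk := hs k kpos p' q' rr cc hpq'.
    have hk1 : (K <= k - s k p' q' rr cc)%N.
      by move: hsk; rewrite leq_min => /andP[_ h2]; lia.
    by rewrite (hK _ hk1 p' q' hpq') // -hr.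
  have hL : forall l : seq ('I_N * 'I_N), exists2 K', (K <= K')%N &
      forall k, (K' <= k)%N -> forall pq, pq \in l -> pq \in S -> rk pq.1 pq.2 = r ->
        x k pq.1 pq.2 = Xs pq.1 pq.2.
    elim=> [|[p q] l [K' hK' IHl]]; first by exists K.
    case: (boolP (((p, q) \in S) && (rk p q == r))) => hpq; last first.
      exists K' => // k hk pq; rewrite inE => /orP[/eqP -> | hl]; last exact: IHl k hk pq hl.
      by move=> h1 /= h2; move: hpq; rewrite h1 h2 eqxx.
    move/andP: hpq => [hpq /eqP hr].
    have [l0 [hl0 hul]] := hu.2 (p, q) hpq (K + shat)%N.
    have stay : forall k, (l0 < k)%N -> x k p q = Xs p q.
      elim=> // k IHk; rewrite ltnS leq_eqVlt => /orP[/eqP <- | hk].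
        have l0pos : (1 <= l0)%N by lia.
        rewrite (hx l0 l0pos p q hpq) hul eqxx; apply: hH => //. lia.
      have kpos : (1 <= k)%N by lia.
      rewrite (hx k kpos p q hpq); case: eqP => _; last exact: IHk.
      apply: hH => //; lia.
    exists (maxn K' l0.+1); first by lia.
    move=> k hk pq; rewrite inE => /orP[/eqP -> _ _ | hl]; first by apply: stay; lia.
    apply: IHl => //; lia.
  have [K' hK' hK'l] := hL (enum S).
  exists K'; first by lia.
  move=> k hk p q hpq; rewrite ltnS leq_eqVlt => /orP[/eqP hr | hr].
    by apply: (hK'l k hk (p, q)) => //; rewrite mem_enum.
  apply: hK => //; lia.
have [delta delta0 hdelta] := Q (N.*2)%N d0 d00.
exists delta => // s u x hs hu hx hinit.
have B := hdelta s u x hs hu hx hinit.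
split.
  move=> k hk; split; apply: hU.
    by move=> p q r c hpq; apply: B => //; exact: rk_lt.
  move=> p q r c hpq; rewrite /delayed mxE.
  have hsk := hs k hk p q r c hpq.
  have hk1 : (1 <= k - s k p q r c)%N.
    by move: hsk; rewrite leq_min => /andP[h1 _]; lia.
  by apply: B => //; exact: rk_lt.
move=> i j r c hij.
have [K K1 hK] := E s u x hs hu hx (N.*2)%N.
apply: cvg_near_cst; exists K => // n /= hn.
by rewrite hK // rk_lt.
Qed.
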